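(* Wilf equivalence partitions the set $\mathbb{P}^3$ of words of length 3 into the following equivalence classes: (1) $\{aaa\}$ for each $a\in\mathbb{P}$; (2) for $a<b$: $\{aab,aba,baa\}$; (3) for $a>b$: $\{aab,baa\}$ and $\{aba\}$; (4) for $a<b<c$: $\{bac,cab\}$ and $\{abc,acb,cba,bca\}$.
   Context: $\mathbb{P}$ is the set of positive integers with the usual order, $\mathbb{P}^*$ the finite words over $\mathbb{P}$, $\mathbb{P}^3$ the words of length 3. For $w=w_1\ldots w_n$, $\mathrm{wt}(w)=t^nx^{\sum_iw_i}$. For words $u,w$, $u\le w$ if there are $|u|$ consecutive letters of $w$ whose $i$-th letter is $\ge$ the $i$-th letter of $u$ for each $i$. $F(u;t,x)=\sum_{w:\,u\le w}\mathrm{wt}(w)$ and $u\backsim v$ (Wilf equivalence) iff $F(u;t,x)=F(v;t,x)$. *)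

(* Defs.v *)
From mathcomp Require Import all_boot.
Set Implicit Arguments. Unset Strict Implicit. Unset Printing Implicit Defensive.

Definition pword (w : seq nat) : bool := all (fun i => 0 < i) w.

Definition pat_le (u w : seq nat) : bool :=
  [exists i : 'I_(size w).+1,
     (i + size u <= size w) &&
     [forall j : 'I_(size u), nth 0 u j <= nth 0 w (i + j)]].

(* Coefficient of t^n x^m in F(u;t,x) = sum_{w in P^*, u <= w} t^|w| x^(sum w):
   the number of words w in P^* of length n and letter sum m with u <= w.
   (Every positive word of sum m has letters <= m, so n-tuples over 'I_m.+1
   enumerate all candidates.) *)
Definition Fcoef (u : seq nat) (n m : nat) : nat :=
  #|[set w : n.-tuple 'I_m.+1 |
      [&& pword (map val w), sumn (map val w) == m & pat_le u (map val w)]]|.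

Definition wilf (u v : seq nat) : Prop := forall n m, Fcoef u n m = Fcoef v n m.

Definition listed_block (B : seq (seq nat)) : Prop :=
  (exists a, 0 < a /\ B = [:: [:: a; a; a]]) \/
  (exists a b, 0 < a /\ a < b /\ B = [:: [:: a; a; b]; [:: a; b; a]; [:: b; a; a]]) \/
  (exists a b, 0 < b /\ b < a /\
     (B = [:: [:: a; a; b]; [:: b; a; a]] \/ B = [:: [:: a; b; a]])) \/
  (exists a b c, 0 < a /\ a < b /\ b < c /\
     (B = [:: [:: b; a; c]; [:: c; a; b]] \/
      B = [:: [:: a; b; c]; [:: a; c; b]; [:: c; b; a]; [:: b; c; a]])).

(* Main.v *)
Require Import Defs.
From mathcomp Require Import all_boot.
From Stdlib Require Import Lia.
Set Implicit Arguments. Unset Strict Implicit. Unset Printing Implicit Defensive.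

Lemma maxnN a b : maxn a b = Nat.max a b.
Proof. rewrite /maxn; case: ltnP => /leP H; lia. Qed.
Ltac slia := repeat match goal with
 | H : is_true (_ <= _) |- _ => move/leP: H => H
 | H : is_true (_ == _) |- _ => move/eqP: H => H
 | H : is_true (~~ (_ <= _)) |- _ => move/negP: H => /leP H
 | H : context [maxn _ _] |- _ => rewrite maxnN in H
 end; rewrite ?maxnN; unfold addn, subn, muln in *;
 try (match goal with |- is_true (_ <= _) => apply/leP | |- is_true (_ == _) => apply/eqP end); lia.

Definition tsum n m (w : n.-tuple 'I_m.+1) := \sum_(i < n) (tnth w i : nat).
Definition Cset n m : {set n.-tuple 'I_m.+1} :=
  [set w : n.-tuple 'I_m.+1 | pword (map val w) && (sumn (map val w) == m)].
Definition Dm n m (f : nat -> nat) : {set n.-tuple 'I_m.+1} :=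
  [set w : n.-tuple 'I_m.+1 | [forall i : 'I_n, f i <= tnth w i]].
Definition TT n (f : nat -> nat) := \sum_(i < n) maxn 1 (f i).
Definition Zs n m k : {set n.-tuple 'I_m.+1} := [set z : n.-tuple 'I_m.+1 | tsum z == k].
Definition cnt n m T := if T <= m then #|Zs n m (m - T)| else 0.

Lemma sumn_tup n m (w : n.-tuple 'I_m.+1) : sumn (map val w) = tsum w.
Proof. by rewrite sumnE big_map big_tuple. Qed.

Lemma pword_tup n m (w : n.-tuple 'I_m.+1) :
  pword (map val w) = [forall i, 0 < tnth w i].
Proof.
rewrite /pword all_map; apply/all_tnthP/forallP => H i; exact: H.
Qed.

Lemma term_le_sum n (F : 'I_n -> nat) i : F i <= \sum_(j < n) F j.
Proof. by rewrite (bigD1 i) //= leq_addr. Qed.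

Lemma memUp n m f (w : n.-tuple 'I_m.+1) :
  (w \in Cset n m :&: Dm n m f) =
  [forall i : 'I_n, maxn 1 (f i) <= tnth w i] && (tsum w == m).
Proof.
rewrite !inE pword_tup sumn_tup.
apply/idP/idP.
- case/andP=> /andP [/forallP H1 ->] /forallP H2; rewrite andbT.
  apply/forallP=> i; rewrite geq_max; apply/andP; split; [exact: H1|exact: H2].
- case/andP=> /forallP H ->; rewrite andbT; apply/andP; split; apply/forallP=> i;
  have := H i; rewrite geq_max => /andP [] //.
Qed.

Lemma cardUp n m f : #|Cset n m :&: Dm n m f| = cnt n m (TT n f).
Proof.
rewrite /cnt; case: (leqP (TT n f) m) => hT; last first.
  apply/eqP; rewrite cards_eq0; apply/eqP/setP => w; rewrite memUp inE.
  apply/negbTE/negP => /andP [/forallP H /eqP Hs].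
  have : TT n f <= tsum w by apply: leq_sum => i _; exact: H.
  by rewrite Hs leqNgt hT.
pose l i := maxn 1 (f i).
pose phi (z : n.-tuple 'I_m.+1) : n.-tuple 'I_m.+1 :=
  [tuple inord (tnth z i + l i) | i < n].
have Hb : forall z, z \in Zs n m (m - TT n f) -> forall i, tnth z i + l i < m.+1.
  move=> z; rewrite inE => /eqP Hz i; rewrite ltnS.
  have h1 : (tnth z i : nat) <= tsum z := term_le_sum (fun j => (tnth z j : nat)) i.
  have h2 : l i <= TT n f := term_le_sum (fun j => maxn 1 (f j)) i.
  rewrite Hz in h1. slia.
have Hv : forall z, z \in Zs n m (m - TT n f) -> forall i,
    (tnth (phi z) i : nat) = tnth z i + l i.
  by move=> z Hz i; rewrite tnth_mktuple inordK // Hb.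
suff -> : Cset n m :&: Dm n m f = phi @: Zs n m (m - TT n f).
  apply: card_in_imset => z1 z2 H1 H2 He; apply: eq_from_tnth => i.
  apply: val_inj; have He' : (tnth (phi z1) i : nat) = tnth (phi z2) i by rewrite He.
  by move: He'; rewrite Hv // Hv // => /addIn.
apply/setP => w; rewrite memUp; apply/idP/imsetP.
- case/andP=> /forallP H /eqP Hs.
  pose z : n.-tuple 'I_m.+1 := [tuple inord (tnth w i - l i) | i < n].
  have Hzv : forall i, (tnth z i : nat) = tnth w i - l i.
    move=> i; rewrite tnth_mktuple inordK //; apply: leq_ltn_trans (ltn_ord _).
    exact: leq_subr.
  have Hzs : tsum z = m - TT n f.
    have : tsum z + TT n f = tsum w.
      rewrite /tsum /TT -big_split /=; apply: eq_bigr => i _.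
      by rewrite Hzv subnK //; exact: H.
    move=> H'; apply/eqP; by rewrite -(eqn_add2r (TT n f)) subnK // H' Hs.
  have Hz : z \in Zs n m (m - TT n f) by rewrite inE Hzs.
  exists z => //; apply: eq_from_tnth => i; apply: val_inj.
  by rewrite /= Hv // Hzv subnK //; exact: H.
- case=> z Hz ->; apply/andP; split.
  + apply/forallP => i; rewrite Hv //; exact: leq_addl.
  + have : tsum (phi z) = tsum z + TT n f.
      rewrite /tsum /TT -big_split /=; apply: eq_bigr => i _; exact: Hv.
    move: Hz; rewrite inE => /eqP -> ->; by rewrite subnK.
Qed.

Lemma cnt_lt n m T : m < T -> cnt n m T = 0.
Proof. by move=> h; rewrite /cnt leqNgt h. Qed.

Lemma cnt_pos n T : 0 < cnt n T T.
Proof.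
rewrite /cnt leqnn subnn card_gt0; apply/set0Pn.
exists [tuple (ord0 : 'I_T.+1) | _ < n]; rewrite inE /tsum.
by apply/eqP; apply: big1 => i _; rewrite tnth_mktuple.
Qed.

Lemma uniqT n T T' : (forall m, cnt n m T = cnt n m T') -> T = T'.
Proof.
move=> H; case: (ltngtP T T') => // h.
- have := cnt_pos n T; by rewrite H (cnt_lt n h).
- have := cnt_pos n T'; by rewrite -H (cnt_lt n h).
Qed.

Lemma pos_min n a b : 0 < cnt n (minn a b) a + cnt n (minn a b) b.
Proof.
case: (leqP a b) => h; by rewrite addn_gt0 cnt_pos ?orbT.
Qed.

Lemma pairT n T1 T2 T3 T4 :
  (forall m, cnt n m T1 + cnt n m T2 = cnt n m T3 + cnt n m T4) ->
  (T1 = T3 /\ T2 = T4) \/ (T1 = T4 /\ T2 = T3).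
Proof.
move=> H.
have Hmin : minn T1 T2 = minn T3 T4.
  case: (ltngtP (minn T1 T2) (minn T3 T4)) => // h.
  - have := pos_min n T1 T2; rewrite H.
    by rewrite (@cnt_lt n _ T3) ?(@cnt_lt n _ T4); try by apply: (leq_trans h); rewrite ?geq_minl ?geq_minr.
  - have := pos_min n T3 T4; rewrite -H.
    by rewrite (@cnt_lt n _ T1) ?(@cnt_lt n _ T2); try by apply: (leq_trans h); rewrite ?geq_minl ?geq_minr.
have c1 : forall a b c d, a = c -> (forall m, cnt n m a + cnt n m b = cnt n m c + cnt n m d) -> b = d.
  move=> a b c d E H'; apply: (@uniqT n) => m; apply/eqP.
  by rewrite -(eqn_add2l (cnt n m a)) H' E.
case: (leqP T1 T2) => h12; case: (leqP T3 T4) => h34.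
- have e1 : minn T1 T2 = T1 by apply/minn_idPl.
  have e2 : minn T3 T4 = T3 by apply/minn_idPl.
  have E : T1 = T3 by rewrite -e1 -e2.
  left; split => //; exact: (c1 _ _ _ _ E H).
- have e1 : minn T1 T2 = T1 by apply/minn_idPl.
  have e2 : minn T3 T4 = T4 by apply/minn_idPr; exact: ltnW.
  have E : T1 = T4 by rewrite -e1 -e2.
  right; split => //; apply: (c1 T1 T2 T4 T3 E) => m; by rewrite H addnC.
- have e1 : minn T1 T2 = T2 by apply/minn_idPr; exact: ltnW.
  have e2 : minn T3 T4 = T3 by apply/minn_idPl.
  have E : T2 = T3 by rewrite -e1 -e2.
  right; split => //; apply: (c1 T2 T1 T3 T4 E) => m; by rewrite addnC H.
- have e1 : minn T1 T2 = T2 by apply/minn_idPr; exact: ltnW.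
  have e2 : minn T3 T4 = T4 by apply/minn_idPr; exact: ltnW.
  have E : T2 = T4 by rewrite -e1 -e2.
  left; split => //; apply: (c1 T2 T1 T4 T3 E) => m; by rewrite addnC H addnC.
Qed.

Lemma bigcap_recr (T : finType) k (Q : pred nat) (A : nat -> {set T}) :
  \bigcap_(0 <= p < k.+1 | Q p) A p =
  if Q k then (\bigcap_(0 <= p < k | Q p) A p) :&: A k
  else \bigcap_(0 <= p < k | Q p) A p.
Proof.
rewrite big_mkcond big_nat_recr //= -big_mkcond.
by case: (Q k); rewrite ?setIT.
Qed.

Lemma bigcap_congr (T : finType) k (Q Q' : pred nat) (A : nat -> {set T}) :
  (forall p, p < k -> Q p = Q' p) ->
  \bigcap_(0 <= p < k | Q p) A p = \bigcap_(0 <= p < k | Q' p) A p.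
Proof.
move=> H; apply: congr_big_nat => // i /andP [_ hi]; exact: H.
Qed.

Lemma setI_rearr (T : finType) (C X Y : {set T}) :
  (C :&: X) :&: (C :&: Y) = (C :&: Y) :&: X.
Proof. by apply/setP => x; rewrite !inE; do 3 case: (_ \in _). Qed.

Lemma setI_rearr2 (T : finType) (C X Y : {set T}) :
  C :&: (X :&: Y) = (C :&: Y) :&: X.
Proof. by apply/setP => x; rewrite !inE; do 3 case: (_ \in _). Qed.

Lemma GU (T : finType) k : forall (A B : nat -> {set T}) (C D : {set T}),
  (forall P : pred nat, #|C :&: \bigcap_(0 <= p < k | P p) A p| =
                        #|D :&: \bigcap_(0 <= p < k | P p) B p|) ->
  #|C :&: \bigcup_(0 <= p < k) A p| = #|D :&: \bigcup_(0 <= p < k) B p|.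
Proof.
elim: k => [|k IH] A B C D H.
  by rewrite !big_geq // !setI0 !cards0.
rewrite !big_nat_recr //= !setIUr.
have h1 := cardsUI (C :&: \bigcup_(0 <= p < k) A p) (C :&: A k).
have h2 := cardsUI (D :&: \bigcup_(0 <= p < k) B p) (D :&: B k).
have e1 : #|C :&: \bigcup_(0 <= p < k) A p| = #|D :&: \bigcup_(0 <= p < k) B p|.
  apply: IH => P; have := H (fun p => P p && (p != k)).
  rewrite !bigcap_recr eqxx andbF.
  have hc : forall p, p < k -> P p && (p != k) = P p.
    by move=> p hp; rewrite (ltn_eqF hp) andbT.
  by rewrite !(@bigcap_congr _ k (fun p => P p && (p != k)) P _ hc).
have e2 : #|C :&: A k| = #|D :&: B k|.
  have := H (pred1 k); rewrite !bigcap_recr /= eqxx.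
  have hc : forall p, p < k -> pred1 k p = xpred0 p by move=> p hp /=; rewrite ltn_eqF.
  rewrite !(@bigcap_congr _ k (pred1 k) xpred0 _ hc).
  by rewrite !big_pred0 // !setTI.
have e3 : #|(C :&: \bigcup_(0 <= p < k) A p) :&: (C :&: A k)| =
          #|(D :&: \bigcup_(0 <= p < k) B p) :&: (D :&: B k)|.
  rewrite !setI_rearr; apply: IH => P.
  have := H (fun p => P p || (p == k)); rewrite !bigcap_recr eqxx orbT.
  have hc : forall p, p < k -> P p || (p == k) = P p.
    by move=> p hp; rewrite (ltn_eqF hp) orbF.
  rewrite !(@bigcap_congr _ k (fun p => P p || (p == k)) P _ hc).
  by rewrite !setI_rearr2.
apply/eqP; rewrite -(eqn_add2r #|(C :&: \bigcup_(0 <= p < k) A p) :&: (C :&: A k)|) h1 e3 h2 e1 e2; by apply/eqP.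
Qed.

Definition shf (u : seq nat) (p q : nat) := if p <= q then nth 0 u (q - p) else 0.
Definition lm k (P : pred nat) (F : nat -> nat -> nat) (q : nat) :=
  \max_(p < k | P p) F p q.

Lemma nth_wv n m (w : n.-tuple 'I_m.+1) q (hq : q < n) :
  nth 0 (map val w) q = tnth w (Ordinal hq).
Proof. by rewrite (nth_map ord0) ?size_tuple // (tnth_nth ord0). Qed.

Lemma patE x y z n m (w : n.-tuple 'I_m.+1) :
  pat_le [:: x; y; z] (map val w) =
  (w \in \bigcup_(p < n - 2) Dm n m (shf [:: x; y; z] p)).
Proof.
rewrite /pat_le; apply/existsP/bigcupP.
- case=> i /andP [hi /forallP H].
  have hs : size (map val w) = n by rewrite size_map size_tuple.
  have hi2 : i + 3 <= n by apply: (leq_trans hi); rewrite hs.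
  have hin : (i : nat) < n - 2 by slia.
  exists (Ordinal hin) => //; rewrite inE; apply/forallP => q /=.
  rewrite /shf; case: (leqP (i : nat) q) => hpq //.
  case: (ltnP (q - i) 3) => hj; last by rewrite nth_default.
  have := H (Ordinal hj); rewrite /= subnKC // (nth_wv w (ltn_ord q)).
  by have -> : Ordinal (ltn_ord q) = q by apply: val_inj.
- case=> p _; rewrite inE => /forallP H.
  have hs : size (map val w) = n by rewrite size_map size_tuple.
  have hp0 := ltn_ord p.
  have hp : (p : nat) < (size (map val w)).+1 by rewrite hs; slia.
  exists (Ordinal hp); apply/andP; split; first by rewrite /= hs; slia.
  apply/forallP => j /=.
  have hj0 : (j : nat) < 3 := ltn_ord j.
  have hq : p + j < n by slia.
  have := H (Ordinal hq); rewrite /shf /= leq_addr addKn (nth_wv w hq); exact.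
Qed.

Lemma capDm n m k (P : pred nat) (F : nat -> nat -> nat) :
  \bigcap_(0 <= p < k | P p) Dm n m (F p) = Dm n m (lm k P F).
Proof.
rewrite big_mkord; apply/setP => w; rewrite [in RHS]inE; apply/bigcapP/forallP.
- move=> H q; rewrite /lm; apply/bigmax_leqP => p hp.
  by have := H p hp; rewrite inE => /forallP.
- move=> H p hp; rewrite inE; apply/forallP => q; apply: (leq_trans _ (H q)).
  rewrite /lm; exact: (@leq_bigmax_cond _ (fun p : 'I_k => P p) (fun p : 'I_k => F p q) p hp).
Qed.

Lemma Fcoef_union x y z n m :
  Fcoef [:: x; y; z] n m =
  #|Cset n m :&: \bigcup_(0 <= p < n - 2) Dm n m (shf [:: x; y; z] p)|.
Proof.
rewrite big_mkord /Fcoef; apply: eq_card => w.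
by rewrite !inE patE andbA.
Qed.

Lemma wilf_of_TT x y z x' y' z' :
  (forall n (P : pred nat), TT n (lm (n - 2) P (shf [:: x; y; z])) =
                            TT n (lm (n - 2) P (shf [:: x'; y'; z']))) ->
  wilf [:: x; y; z] [:: x'; y'; z'].
Proof.
move=> H n m; rewrite !Fcoef_union; apply: GU => P.
by rewrite !capDm !cardUp H.
Qed.

Definition bb k (P : pred nat) j q := [&& j <= q, q - j < k & P (q - j)].

Lemma lm_shf k P x y z q :
  lm k P (shf [:: x; y; z]) q =
  maxn (bb k P 0 q * x) (maxn (bb k P 1 q * y) (bb k P 2 q * z)).
Proof.
apply/eqP; rewrite eqn_leq; apply/andP; split.
- apply/bigmax_leqP => p hp; rewrite /shf.
  case: (leqP (p : nat) q) => hpq //.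
  have hp0 := ltn_ord p.
  case E: (q - p) => [|[|[|j]]] /=; last by rewrite nth_nil.
  + have hb : bb k P 0 q.
      rewrite /bb; have -> : q - 0 = p by slia.
      by rewrite hp0 hp.
    by rewrite hb mul1n leq_maxl.
  + have hb : bb k P 1 q.
      rewrite /bb; have -> : q - 1 = p by slia.
      rewrite hp0 hp !andbT; slia.
    by rewrite hb mul1n !leq_max leqnn !orbT.
  + have hb : bb k P 2 q.
      rewrite /bb; have -> : q - 2 = p by slia.
      rewrite hp0 hp !andbT; slia.
    by rewrite hb mul1n !leq_max leqnn !orbT.
- have key : forall j, j < 3 -> bb k P j q -> nth 0 [:: x; y; z] j <= lm k P (shf [:: x; y; z]) q.
    move=> i hj /and3P [hjq hk hP].
    rewrite /lm; apply: leq_trans (@leq_bigmax_cond _ (fun p : 'I_k => P p)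
       (fun p : 'I_k => shf [:: x; y; z] p q) (Ordinal hk) hP).
    by rewrite /shf /= leq_subr subKn.
  rewrite !geq_max; apply/and3P; split.
  + case hb: (bb k P 0 q); last by [].
    by rewrite mul1n; exact: (key 0).
  + case hb: (bb k P 1 q); last by [].
    by rewrite mul1n; exact: (key 1).
  + case hb: (bb k P 2 q); last by [].
    by rewrite mul1n; exact: (key 2).
Qed.

Lemma sum_bb n P :
  \sum_(q < n) bb (n - 2) P 2 q = \sum_(q < n) bb (n - 2) P 1 q.
Proof.
case: n => [|n]; first by rewrite !big_ord0.
rewrite big_ord_recl big_ord_recr /=.
have -> : bb (n.+1 - 2) P 1 n = false.
  rewrite /bb; case: n => [|n] //=. by rewrite !subSS !subn0 ltnn.
rewrite /bb /= add0n addn0; apply: eq_bigr => i _.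
by rewrite /bump /= add1n subSS.
Qed.

Definition gg x y z (b0 b1 b2 : bool) := maxn 1 (maxn (b0 * x) (maxn (b1 * y) (b2 * z))).

Lemma wilf_lin x y z x' y' z' d :
  (forall b0 b1 b2 : bool, gg x y z b0 b1 b2 + d * b1 = gg x' y' z' b0 b1 b2 + d * b2) ->
  wilf [:: x; y; z] [:: x'; y'; z'].
Proof.
move=> H; apply: wilf_of_TT => n P; rewrite /TT.
have E : \sum_(q < n) (maxn 1 (lm (n - 2) P (shf [:: x; y; z]) q) + d * bb (n - 2) P 1 q) =
         \sum_(q < n) (maxn 1 (lm (n - 2) P (shf [:: x'; y'; z']) q) + d * bb (n - 2) P 2 q).
  by apply: eq_bigr => q _; rewrite !lm_shf; exact: H.
move: E; rewrite !big_split /= -!big_distrr /= sum_bb => E.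
by apply/eqP; rewrite -(eqn_add2r (d * \sum_(q < n) bb (n - 2) P 1 q)) E.
Qed.

Lemma pat_leP u s : pat_le u s <->
  exists p, p + size u <= size s /\ forall j, j < size u -> nth 0 u j <= nth 0 s (p + j).
Proof.
split.
- case/existsP => i /andP [hi /forallP H]; exists i; split => // j hj.
  exact: (H (Ordinal hj)).
- case=> p [hp H].
  have hp' : p < (size s).+1 by rewrite ltnS; apply: leq_trans hp; exact: leq_addr.
  apply/existsP; exists (Ordinal hp'); rewrite /= hp; apply/forallP => j.
  exact: H j (ltn_ord j).
Qed.

Lemma pat_le_rev u s : pat_le u s -> pat_le (rev u) (rev s).
Proof.
move/pat_leP => [p [hp H]]; apply/pat_leP.
exists (size s - size u - p); rewrite !size_rev; split; first by slia.
move=> j hj; rewrite nth_rev // nth_rev; last by slia.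
have hj' : size u - j.+1 < size u by slia.
have := H _ hj'.
have -> : p + (size u - j.+1) = size s - (size s - size u - p + j).+1 by slia.
by [].
Qed.

Lemma Fcoef_rev u n m : Fcoef (rev u) n m = Fcoef u n m.
Proof.
rewrite /Fcoef.
pose f (w : n.-tuple 'I_m.+1) : n.-tuple 'I_m.+1 := [tuple of rev w].
have finj : injective f.
  move=> w1 w2 /(congr1 val) /= /(congr1 rev); rewrite !revK => e; exact: val_inj.
rewrite -(card_preimset _ finj); apply: eq_card => w; rewrite !inE /f /=.
rewrite map_rev /pword all_rev sumn_rev.
congr (_ && (_ && _)); apply/idP/idP => h.
- by have := pat_le_rev h; rewrite !revK.
- exact: pat_le_rev.
Qed.

Lemma inDm n m f (w : n.-tuple 'I_m.+1) : (w \in Dm n m f) = [forall i : 'I_n, f i <= tnth w i].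
Proof. by rewrite inE. Qed.

Lemma CDmI n m f g :
  (Cset n m :&: Dm n m f) :&: (Cset n m :&: Dm n m g) =
  Cset n m :&: Dm n m (fun q => maxn (f q) (g q)).
Proof.
apply/setP => w; rewrite !in_setI !inDm.
case: (w \in Cset n m) => //=; apply/andP/forallP.
- case=> /forallP H1 /forallP H2 i; rewrite geq_max H1 H2 //.
- move=> H; split; apply/forallP => i; have := H i; rewrite geq_max => /andP [] //.
Qed.

Lemma F3 x y z m : 0 < x -> 0 < y -> 0 < z ->
  Fcoef [:: x; y; z] 3 m = cnt 3 m (x + y + z).
Proof.
move=> hx hy hz; rewrite Fcoef_union big_nat1 cardUp.
congr cnt; rewrite /TT !big_ord_recr big_ord0 /= /shf /=; slia.
Qed.

Lemma F4 x y z m : 0 < x -> 0 < y -> 0 < z ->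
  Fcoef [:: x; y; z] 4 m + cnt 4 m (x + maxn x y + maxn y z + z) =
  cnt 4 m (x + y + z + 1) + cnt 4 m (x + y + z + 1).
Proof.
move=> hx hy hz; rewrite Fcoef_union.
rewrite /= !big_nat_recr //= big_geq // set0U setIUr.
have h := cardsUI (Cset 4 m :&: Dm 4 m (shf [:: x; y; z] 0))
                  (Cset 4 m :&: Dm 4 m (shf [:: x; y; z] 1)).
rewrite CDmI !cardUp in h.
have e0 : TT 4 (shf [:: x; y; z] 0) = x + y + z + 1.
  rewrite /TT !big_ord_recr big_ord0 /= /shf /=; slia.
have e1 : TT 4 (shf [:: x; y; z] 1) = x + y + z + 1.
  rewrite /TT !big_ord_recr big_ord0 /= /shf /=; slia.
have e2 : TT 4 (fun q => maxn (shf [:: x; y; z] 0 q) (shf [:: x; y; z] 1 q)) =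
          x + maxn x y + maxn y z + z.
  rewrite /TT !big_ord_recr big_ord0 /= /shf /=; slia.
by rewrite e0 e1 e2 in h.
Qed.


Lemma maxn1 a : 0 < a -> maxn 1 a = a.
Proof. by move=> h; apply/maxn_idPr. Qed.

Ltac ttc := rewrite /TT !big_ord_recr big_ord0 /= /shf /= ?maxn0 ?max0n ?maxnn;
  rewrite ?maxn1 ?add0n //; rewrite ?leq_max; repeat (apply/orP; left); done.

Lemma arith5 U V W a b c d e f g :
  U + W = V + c -> V + d = a + b -> W + g = e + f -> U + d + f + e = a + b + c + g.
Proof. move=> h1 h2 h3; slia. Qed.

Lemma F5 x y z m : 0 < x -> 0 < y -> 0 < z ->
  Fcoef [:: x; y; z] 5 m + cnt 5 m (x + maxn y x + maxn z y + z + 1)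
   + cnt 5 m (1 + x + maxn y x + maxn z y + z) + cnt 5 m (x + y + maxn z x + y + z) =
  cnt 5 m (x + y + z + 1 + 1) + cnt 5 m (1 + x + y + z + 1) + cnt 5 m (1 + 1 + x + y + z)
   + cnt 5 m (x + maxn y x + maxn (maxn z x) (maxn y x) + maxn y (maxn z y) + z).
Proof.
move=> hx hy hz; rewrite Fcoef_union.
rewrite /= !big_nat_recr //= big_geq // set0U !setIUr.
set X := Cset 5 m :&: Dm 5 m (shf [:: x; y; z] 0).
set Y := Cset 5 m :&: Dm 5 m (shf [:: x; y; z] 1).
set Z := Cset 5 m :&: Dm 5 m (shf [:: x; y; z] 2).
have h1 := cardsUI (X :|: Y) Z.
have h2 := cardsUI X Y.
have h3 := cardsUI (X :&: Z) (Y :&: Z).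
have e : (X :|: Y) :&: Z = (X :&: Z) :|: (Y :&: Z) by rewrite setIUl.
rewrite e in h1.
have hX : #|X| = cnt 5 m (x + y + z + 1 + 1) by rewrite /X cardUp; congr cnt; ttc.
have hY : #|Y| = cnt 5 m (1 + x + y + z + 1) by rewrite /Y cardUp; congr cnt; ttc.
have hZ : #|Z| = cnt 5 m (1 + 1 + x + y + z) by rewrite /Z cardUp; congr cnt; ttc.
have hXY : #|X :&: Y| = cnt 5 m (x + maxn y x + maxn z y + z + 1).
  by rewrite /X /Y CDmI cardUp; congr cnt; ttc.
have hXZ : #|X :&: Z| = cnt 5 m (x + y + maxn z x + y + z).
  by rewrite /X /Z CDmI cardUp; congr cnt; ttc.
have hYZ : #|Y :&: Z| = cnt 5 m (1 + x + maxn y x + maxn z y + z).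
  by rewrite /Y /Z CDmI cardUp; congr cnt; ttc.
have hXYZ : #|(X :&: Z) :&: (Y :&: Z)| =
    cnt 5 m (x + maxn y x + maxn (maxn z x) (maxn y x) + maxn y (maxn z y) + z).
  by rewrite /X /Y /Z !CDmI cardUp; congr cnt; ttc.
rewrite hX hY in h2; rewrite hXY in h2; rewrite hZ in h1; rewrite hXZ hYZ hXYZ in h3.
exact: (arith5 h1 h2 h3).
Qed.

Definition S4 x y z := x + maxn x y + maxn y z + z.
Definition A5 x y z := x + y + maxn z x + y + z.
Definition T5 x y z := x + maxn y x + maxn (maxn z x) (maxn y x) + maxn y (maxn z y) + z.

Lemma F4' x y z m : 0 < x -> 0 < y -> 0 < z ->
  Fcoef [:: x; y; z] 4 m + cnt 4 m (S4 x y z) =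
  cnt 4 m (x + y + z + 1) + cnt 4 m (x + y + z + 1).
Proof. exact: F4. Qed.

Lemma F5' x y z m : 0 < x -> 0 < y -> 0 < z ->
  Fcoef [:: x; y; z] 5 m + cnt 5 m (S4 x y z + 1) + cnt 5 m (S4 x y z + 1)
   + cnt 5 m (A5 x y z) =
  cnt 5 m (x + y + z + 2) + cnt 5 m (x + y + z + 2) + cnt 5 m (x + y + z + 2)
   + cnt 5 m (T5 x y z).
Proof.
move=> hx hy hz; have := F5 m hx hy hz.
have -> : x + maxn y x + maxn z y + z + 1 = S4 x y z + 1 by rewrite /S4 (maxnC y x) (maxnC z y).
have -> : 1 + x + maxn y x + maxn z y + z = S4 x y z + 1 by rewrite /S4 (maxnC y x) (maxnC z y); slia.
have -> : x + y + z + 1 + 1 = x + y + z + 2 by slia.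
have -> : 1 + x + y + z + 1 = x + y + z + 2 by slia.
have -> : 1 + 1 + x + y + z = x + y + z + 2 by slia.
by [].
Qed.

Lemma arithP (F a b p q p' q' : nat) :
  F + a + a + p = b + b + b + q -> F + a + a + p' = b + b + b + q' -> p + q' = p' + q.
Proof. move=> h1 h2; slia. Qed.

Lemma inv_wilf x y z x' y' z' : 0 < x -> 0 < y -> 0 < z -> 0 < x' -> 0 < y' -> 0 < z' ->
  wilf [:: x; y; z] [:: x'; y'; z'] ->
  [/\ x + y + z = x' + y' + z', S4 x y z = S4 x' y' z' &
     (A5 x y z = A5 x' y' z' /\ T5 x' y' z' = T5 x y z) \/
     (A5 x y z = T5 x y z /\ T5 x' y' z' = A5 x' y' z')].
Proof.
move=> hx hy hz hx' hy' hz' H.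
have hs : x + y + z = x' + y' + z'.
  apply: (@uniqT 3) => m; by rewrite -F3 // -F3 // H.
have h4 : S4 x y z = S4 x' y' z'.
  apply: (@uniqT 4) => m; apply/eqP.
  rewrite -(eqn_add2l (Fcoef [:: x'; y'; z'] 4 m)).
  by rewrite -{1}H F4' // F4' // hs.
split => //.
apply: (@pairT 5) => m.
have e1 := F5' m hx hy hz; have e2 := F5' m hx' hy' hz'.
rewrite H hs h4 in e1.
exact: (arithP e1 e2).
Qed.

Lemma wilf_sym u v : wilf u v -> wilf v u.
Proof. by move=> H n m; rewrite H. Qed.
Lemma wilf_trans u v w : wilf u v -> wilf v w -> wilf u w.
Proof. by move=> H1 H2 n m; rewrite H1 H2. Qed.
Lemma wilf_rev u : wilf u (rev u).
Proof. by move=> n m; rewrite Fcoef_rev. Qed.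

Lemma maxnl a b : b <= a -> maxn a b = a.
Proof. by move/maxn_idPl. Qed.
Lemma maxnr a b : a <= b -> maxn a b = b.
Proof. by move/maxn_idPr. Qed.

Ltac elim_max := repeat match goal with
 | |- context [maxn ?a ?b] =>
    first [ rewrite (@maxnl a b); last by slia | rewrite (@maxnr a b); last by slia ]
 end.

Ltac arith_tac x y z :=
  rewrite /S4 /A5 /T5;
  case: (leqP x y) => ?; case: (leqP y z) => ?; case: (leqP z x) => ?;
  elim_max; intros; slia.

Lemma ar1 a x y z : 0 < a -> 0 < x -> 0 < y -> 0 < z ->
  a + a + a = x + y + z -> S4 a a a = S4 x y z ->
  (A5 a a a = A5 x y z /\ T5 x y z = T5 a a a) \/ (A5 a a a = T5 a a a /\ T5 x y z = A5 x y z) ->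
  x = a /\ y = a /\ z = a.
Proof. move=> ha hx hy hz. arith_tac x y z. Qed.

Lemma ar2 a b x y z : 0 < a -> a < b -> 0 < x -> 0 < y -> 0 < z ->
  a + a + b = x + y + z -> S4 a a b = S4 x y z ->
  (A5 a a b = A5 x y z /\ T5 x y z = T5 a a b) \/ (A5 a a b = T5 a a b /\ T5 x y z = A5 x y z) ->
  (x = a /\ y = a /\ z = b) \/ (x = a /\ y = b /\ z = a) \/ (x = b /\ y = a /\ z = a).
Proof. move=> ha hab hx hy hz. arith_tac x y z. Qed.

Lemma ar3a a b x y z : 0 < b -> b < a -> 0 < x -> 0 < y -> 0 < z ->
  a + a + b = x + y + z -> S4 a a b = S4 x y z ->
  (A5 a a b = A5 x y z /\ T5 x y z = T5 a a b) \/ (A5 a a b = T5 a a b /\ T5 x y z = A5 x y z) ->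
  (x = a /\ y = a /\ z = b) \/ (x = b /\ y = a /\ z = a).
Proof. move=> ha hab hx hy hz. arith_tac x y z. Qed.

Lemma ar3b a b x y z : 0 < b -> b < a -> 0 < x -> 0 < y -> 0 < z ->
  a + b + a = x + y + z -> S4 a b a = S4 x y z ->
  (A5 a b a = A5 x y z /\ T5 x y z = T5 a b a) \/ (A5 a b a = T5 a b a /\ T5 x y z = A5 x y z) ->
  x = a /\ y = b /\ z = a.
Proof. move=> ha hab hx hy hz. arith_tac x y z. Qed.

Lemma ar4a a b c x y z : 0 < a -> a < b -> b < c -> 0 < x -> 0 < y -> 0 < z ->
  b + a + c = x + y + z -> S4 b a c = S4 x y z ->
  (A5 b a c = A5 x y z /\ T5 x y z = T5 b a c) \/ (A5 b a c = T5 b a c /\ T5 x y z = A5 x y z) ->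
  (x = b /\ y = a /\ z = c) \/ (x = c /\ y = a /\ z = b).
Proof. move=> ha hab hbc hx hy hz. arith_tac x y z. Qed.

Lemma ar4b a b c x y z : 0 < a -> a < b -> b < c -> 0 < x -> 0 < y -> 0 < z ->
  a + b + c = x + y + z -> S4 a b c = S4 x y z ->
  (A5 a b c = A5 x y z /\ T5 x y z = T5 a b c) \/ (A5 a b c = T5 a b c /\ T5 x y z = A5 x y z) ->
  (x = a /\ y = b /\ z = c) \/ (x = a /\ y = c /\ z = b) \/ (x = c /\ y = b /\ z = a)
    \/ (x = b /\ y = c /\ z = a).
Proof. move=> ha hab hbc hx hy hz. arith_tac x y z. Qed.

Lemma eq2 a b : 0 < a -> a < b -> wilf [:: a; a; b] [:: a; b; a].
Proof.
move=> ha hab; apply: (@wilf_lin _ _ _ _ _ _ (b - a)).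
case; case; case; rewrite /gg /=; slia.
Qed.

Lemma eq4 a b c : 0 < a -> a < b -> b < c -> wilf [:: a; b; c] [:: a; c; b].
Proof.
move=> ha hab hbc; apply: (@wilf_lin _ _ _ _ _ _ (c - b)).
case; case; case; rewrite /gg /=; slia.
Qed.

Lemma blk_gen (B : seq (seq nat)) r : r \in B ->
  (forall u, u \in B -> wilf r u) ->
  (forall x y z, 0 < x -> 0 < y -> 0 < z -> wilf r [:: x; y; z] -> [:: x; y; z] \in B) ->
  forall u, u \in B -> forall v, size v = 3 -> pword v -> (wilf u v <-> v \in B).
Proof.
move=> hr rep cls u hu v hv pv; split.
- move=> H; have H' := wilf_trans (rep u hu) H; clear H.
  move: hv pv H'; case: v => [|x [|y [|z [|t v]]]] //= _.
  case/and4P => hx hy hz _; exact: cls.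
- move=> hv'; exact: wilf_trans (wilf_sym (rep u hu)) (rep v hv').
Qed.

Lemma part2 B : listed_block B -> forall u, u \in B ->
  forall v : seq nat, size v = 3 -> pword v -> (wilf u v <-> v \in B).
Proof.
case=> [[a [ha ->]] | [[a [b [ha [hab ->]]]] | [[a [b [hb [hba [-> | ->]]]]] |
        [a [b [c [ha [hab [hbc [-> | ->]]]]]]]]]].
- apply: (@blk_gen _ [:: a; a; a]); first by rewrite inE.
    by move=> u; rewrite inE => /eqP ->.
  move=> x y z hx hy hz /(inv_wilf ha ha ha hx hy hz) [hs h4 h5].
  by case: (ar1 ha hx hy hz hs h4 h5) => -> [-> ->]; rewrite inE.
- have hb : 0 < b by apply: leq_trans hab.
  apply: (@blk_gen _ [:: a; a; b]); first by rewrite inE eqxx.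
    move=> u; rewrite !inE => /or3P [] /eqP ->.
    + by move=> n m.
    + exact: eq2.
    + exact: (wilf_rev [:: a; a; b]).
  move=> x y z hx hy hz /(inv_wilf ha ha hb hx hy hz) [hs h4 h5].
  by case: (ar2 ha hab hx hy hz hs h4 h5) => [[-> [-> ->]] | [[-> [-> ->]] | [-> [-> ->]]]];
    rewrite !inE eqxx ?orbT.
- have ha : 0 < a by apply: leq_trans hba.
  apply: (@blk_gen _ [:: a; a; b]); first by rewrite inE eqxx.
    move=> u; rewrite !inE => /orP [] /eqP ->.
    + by move=> n m.
    + exact: (wilf_rev [:: a; a; b]).
  move=> x y z hx hy hz /(inv_wilf ha ha hb hx hy hz) [hs h4 h5].
  by case: (ar3a hb hba hx hy hz hs h4 h5) => [[-> [-> ->]] | [-> [-> ->]]];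
    rewrite !inE eqxx ?orbT.
- have ha : 0 < a by apply: leq_trans hba.
  apply: (@blk_gen _ [:: a; b; a]); first by rewrite inE eqxx.
    by move=> u; rewrite !inE => /eqP ->.
  move=> x y z hx hy hz /(inv_wilf ha hb ha hx hy hz) [hs h4 h5].
  by case: (ar3b hb hba hx hy hz hs h4 h5) => -> [-> ->]; rewrite !inE.
- have hb : 0 < b by apply: leq_trans hab.
  have hc : 0 < c by apply: leq_trans hbc.
  apply: (@blk_gen _ [:: b; a; c]); first by rewrite inE eqxx.
    move=> u; rewrite !inE => /orP [] /eqP ->.
    + by move=> n m.
    + exact: (wilf_rev [:: b; a; c]).
  move=> x y z hx hy hz /(inv_wilf hb ha hc hx hy hz) [hs h4 h5].
  by case: (ar4a ha hab hbc hx hy hz hs h4 h5) => [[-> [-> ->]] | [-> [-> ->]]];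
    rewrite !inE eqxx ?orbT.
- have hb : 0 < b by apply: leq_trans hab.
  have hc : 0 < c by apply: leq_trans hbc.
  apply: (@blk_gen _ [:: a; b; c]); first by rewrite inE eqxx.
    move=> u; rewrite !inE => /or4P [] /eqP ->.
    + by move=> n m.
    + exact: eq4.
    + exact: (wilf_rev [:: a; b; c]).
    + exact: wilf_trans (eq4 ha hab hbc) (wilf_rev [:: a; c; b]).
  move=> x y z hx hy hz /(inv_wilf ha hb hc hx hy hz) [hs h4 h5].
  by case: (ar4b ha hab hbc hx hy hz hs h4 h5) =>
    [[-> [-> ->]] | [[-> [-> ->]] | [[-> [-> ->]] | [-> [-> ->]]]]];
    rewrite !inE eqxx ?orbT.
Qed.

Definition c1 a : seq (seq nat) := [:: [:: a; a; a]].
Definition c2 a b : seq (seq nat) := [:: [:: a; a; b]; [:: a; b; a]; [:: b; a; a]].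
Definition c3a a b : seq (seq nat) := [:: [:: a; a; b]; [:: b; a; a]].
Definition c3b a b : seq (seq nat) := [:: [:: a; b; a]].
Definition c4a a b c : seq (seq nat) := [:: [:: b; a; c]; [:: c; a; b]].
Definition c4b a b c : seq (seq nat) := [:: [:: a; b; c]; [:: a; c; b]; [:: c; b; a]; [:: b; c; a]].

Lemma L1 a : 0 < a -> listed_block (c1 a).
Proof. by move=> ha; left; exists a. Qed.
Lemma L2 a b : 0 < a -> a < b -> listed_block (c2 a b).
Proof. by move=> ha hab; right; left; exists a, b. Qed.
Lemma L3a a b : 0 < b -> b < a -> listed_block (c3a a b).
Proof. by move=> hb hba; right; right; left; exists a, b; do !split => //; left. Qed.
Lemma L3b a b : 0 < b -> b < a -> listed_block (c3b a b).
Proof. by move=> hb hba; right; right; left; exists a, b; do !split => //; right. Qed.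
Lemma L4a a b c : 0 < a -> a < b -> b < c -> listed_block (c4a a b c).
Proof. by move=> ha hab hbc; right; right; right; exists a, b, c; do !split => //; left. Qed.
Lemma L4b a b c : 0 < a -> a < b -> b < c -> listed_block (c4b a b c).
Proof. by move=> ha hab hbc; right; right; right; exists a, b, c; do !split => //; right. Qed.

Ltac memb := by rewrite /c1 /c2 /c3a /c3b /c4a /c4b !inE eqxx ?orbT.

Ltac try2 L C a b := solve [exists (C a b); split; [apply: (@L a b); slia | memb]].
Ltac try3 L C a b c := solve [exists (C a b c); split; [apply: (@L a b c); slia | memb]].

Ltac pick := match goal with
 | |- context [ [:: ?x; ?y; ?z] ] =>
   first [ solve [exists (c1 x); split; [apply: (@L1 x); slia | memb]]
         | try2 L2 c2 x y | try2 L2 c2 x z | try2 L2 c2 y x | try2 L2 c2 y z | try2 L2 c2 z x | try2 L2 c2 z y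
         | try2 L3a c3a x y | try2 L3a c3a x z | try2 L3a c3a y x | try2 L3a c3a y z | try2 L3a c3a z x | try2 L3a c3a z y
         | try2 L3b c3b x y | try2 L3b c3b x z | try2 L3b c3b y x | try2 L3b c3b y z | try2 L3b c3b z x | try2 L3b c3b z y
         | try3 L4a c4a x y z | try3 L4a c4a x z y | try3 L4a c4a y x z | try3 L4a c4a y z x | try3 L4a c4a z x y | try3 L4a c4a z y x
         | try3 L4b c4b x y z | try3 L4b c4b x z y | try3 L4b c4b y x z | try3 L4b c4b y z x | try3 L4b c4b z x y | try3 L4b c4b z y x ]
 end.

Lemma part1 u : size u = 3 -> pword u -> exists B, listed_block B /\ u \in B.
Proof.
case: u => [|x [|y [|z [|t u]]]] //= _; case/and4P => hx hy hz _.
case: (ltngtP x y) => h1; case: (ltngtP y z) => h2; case: (ltngtP x z) => h3;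
  try (exfalso; slia); subst; pick.
Qed.

Theorem theorem7 :
  (forall u : seq nat, size u = 3 -> pword u ->
     exists B, listed_block B /\ u \in B) /\
  (forall B, listed_block B -> forall u, u \in B ->
     forall v : seq nat, size v = 3 -> pword v -> (wilf u v <-> v \in B)).
Proof. split; [exact: part1 | exact: part2]. Qed.
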